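(* Let $N\ge1$ and let $\mathbf U$ be an $N\times N$ unitary-like matrix with rows $\mathbf u^0,\dots,\mathbf u^{N-1}$; let $\mathbb A=\{\mathbf u^0,\dots,\mathbf u^{N-1}\}$ (a set of $N$ sequences of length $N$). Partition $\mathbb A$ arbitrarily into nonempty subsets $\mathbb A^{(0)},\dots,\mathbb A^{(P-1)}$, and index the elements of each subset arbitrarily as $\mathbb A^{(p)}=(\mathbf a^{(p)}_0,\dots,\mathbf a^{(p)}_{n_p-1})$ with $n_p=|\mathbb A^{(p)}|$. For each $p$, choose an arbitrary $n_p\times n_p$ unitary-like matrix $\mathbf U^{(p)}$ with rows $\mathbf u^{(p),0},\dots,\mathbf u^{(p),n_p-1}$. For $0\le p<P$ and $0\le m<n_p$ define the sequence $$\mathbf s^{(p,m)}=\mathbf u^{(p),m}\odot\mathbb A^{(p)}=\big(u^{(p),m}_0\mathbf a^{(p)}_0\ \ u^{(p),m}_1\mathbf a^{(p)}_1\ \cdots\ u^{(p),m}_{n_p-1}\mathbf a^{(p)}_{n_p-1}\big)$$ of length $n_pN$. Then the family of the $N$ sequences $\{\mathbf s^{(p,m)}: 0\le p<P,\ 0\le m<n_p\}$ is an optimal $(N,1,\mathbb L)$-$N$-CO-SF, where $\mathbb L$ is the set of distinct values among $\{n_pN\}_{p}$.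
   Context: All sequences are finite complex sequences. A sequence $\mathbf s=(s_0,\dots,s_{L-1})$ of length $L$ is identified with the function $s:\mathbb Z\to\mathbb C$ given by $s(n)=s_n$ for $0\le n<L$ and $s(n)=0$ otherwise. For sequences $\mathbf s,\mathbf s'$ of lengths $L,L'$ (possibly different), the aperiodic correlation is $R_{\mathbf s,\mathbf s'}(\tau)=\sum_{l=0}^{L-1}s(l)\,\overline{s'(l+\tau)}$ for $\tau\in\mathbb Z$. The energy of $\mathbf s$ is $E_{\mathbf s}=R_{\mathbf s,\mathbf s}(0)$. An $(M,1,\mathbb L)$-$N$-shift cross-orthogonal sequence family ($N$-CO-SF) is an indexed family $(\mathbf s^0,\dots,\mathbf s^{M-1})$ of complex sequences, where $\mathbf s^m$ has length $L^{(m)}$ divisible by $N$, and $\mathbb L$ is the set of distinct values among $L^{(0)},\dots,L^{(M-1)}$, such that for all $0\le m,m'<M$ and all $k\in\mathbb Z$, $R_{\mathbf s^m,\mathbf s^{m'}}(kN)=E_{\mathbf s^m}\,\delta(m-m')\,\delta(k)$, where $\delta$ is the Kronecker delta. An $(M,1,\mathbb L)$-$N$-CO-SF is called optimal if $M=N$. An $n\times n$ complex matrix $\mathbf U$ is unitary-like if $\mathbf U\mathbf U^H=\mathbf U^H\mathbf U=\alpha\mathbf I_n$ for some real $\alpha>0$. Connection operator: for a vector $\mathbf v=(v_0,\dots,v_{K'-1})$ and an indexed set $\mathbb A=(\mathbf a_0,\dots,\mathbf a_{M-1})$ of $M$ sequences of common length $L$, with $K=\mathrm{lcm}(M,K')$,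 $\mathbf v\odot\mathbb A$ is the length-$KL$ concatenation $\big(v_{[k]_{K'}}\mathbf a_{[k]_M}\big)_{k=0}^{K-1}$, where $[a]_b$ is the remainder of $a$ modulo $b$. *)

(* Defs.v *)
(* Complex numbers are modelled by an arbitrary
   numClosedFieldType C (e.g. algC), with conjugation Num.conj. *)
From HB Require Import structures.
From mathcomp Require Import all_boot all_order all_algebra.
Set Implicit Arguments. Unset Strict Implicit. Unset Printing Implicit Defensive.
Import Order.TTheory GRing.Theory Num.Theory.
Local Open Scope ring_scope.

Section Defs.
Variable C : numClosedFieldType.

Definition sfun (s : seq C) (n : int) : C :=
  match n with Posz k => nth 0 s k | Negz _ => 0 end.

Definition corr (s s' : seq C) (tau : int) : C :=
  \sum_(l < size s) sfun s l%:Z * Num.conj (sfun s' (l%:Z + tau)).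

Definition energy (s : seq C) : C := corr s s 0.

(* (M,1,L)-N-CO-SF for a family indexed by a finite type I (M = #|I|),
   with L the set (duplicate-free list) of distinct lengths. *)
Definition is_COSF (N : nat) (I : finType) (L : seq nat) (s : I -> seq C) : Prop :=
  [/\ forall i, (N %| size (s i))%N,
      uniq L /\ L =i [seq size (s i) | i <- enum I] &
      forall (i i' : I) (k : int),
        corr (s i) (s i') (k * N%:Z) =
        energy (s i) * (i == i')%:R * (k == 0)%:R].

Definition is_optimal_COSF (N : nat) (I : finType) (L : seq nat) (s : I -> seq C) : Prop :=
  is_COSF N L s /\ #|I| = N.

Definition ctr (n : nat) (U : 'M[C]_n) : 'M[C]_n := (map_mx Num.conj U)^T.

Definition unitary_like (n : nat) (U : 'M[C]_n) : Prop :=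
  exists alpha : C, [/\ alpha \is Num.real, 0 < alpha,
    U *m ctr U = alpha%:M & ctr U *m U = alpha%:M].

Definition rowseq (m n : nat) (U : 'M[C]_(m, n)) (i : 'I_m) : seq C :=
  [seq U i j | j <- enum 'I_n].

Definition connection (v : seq C) (A : seq (seq C)) : seq C :=
  flatten [seq [seq nth 0 v (k %% size v)%N * x | x <- nth [::] A (k %% size A)%N]
          | k <- iota 0 (lcmn (size A) (size v))].

End Defs.

(* Main.v *)
Require Import Defs.
From HB Require Import structures.
From mathcomp Require Import all_boot all_order all_algebra.
Import Order.TTheory GRing.Theory Num.Theory.
Local Open Scope ring_scope.

Section H.
Variable C : numClosedFieldType.

Lemma sfun_neg (s : seq C) (z : int) : z < 0 -> sfun s z = 0.
Proof. by case: z. Qed.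

Lemma sum_blocks (F : nat -> C) n N :
  \sum_(l < n * N) F l = \sum_(j < n) \sum_(r < N) F (j * N + r)%N.
Proof.
elim: n => [|n IH]; first by rewrite mul0n !big_ord0.
rewrite big_ord_recr /= -IH mulSnr big_split_ord /=.
done.
Qed.

Lemma nth_flat (B : seq (seq C)) N : all (fun b => size b == N) B ->
  forall j r, (r < N)%N -> nth 0 (flatten B) (j * N + r) = nth 0 (nth [::] B j) r.
Proof.
elim: B => [|b B IH] /=; first by move=> _ j r _; rewrite !nth_nil.
move=> /andP[/eqP Hb HB] [|j] r Hr.
  by rewrite mul0n add0n nth_cat Hb Hr.
by rewrite nth_cat Hb mulSn -addnA ltnNge leq_addr /= addKn IH.
Qed.

Lemma size_flat (B : seq (seq C)) N : all (fun b => size b == N) B ->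
  size (flatten B) = (size B * N)%N.
Proof.
elim: B => //= b B IH /andP[/eqP Hb HB]; by rewrite size_cat Hb IH // mulSn.
Qed.

Lemma conn_eq (v : seq C) (A : seq (seq C)) n0 : size v = n0 -> size A = n0 ->
  connection v A = flatten [seq [seq nth 0 v k * x | x <- nth [::] A k] | k <- iota 0 n0].
Proof.
rewrite /connection => -> ->. rewrite Order.NatDvd.lcmnn.
congr flatten; apply eq_in_map => k; rewrite mem_iota add0n => /andP[_ Hk].
by rewrite modn_small.
Qed.

Section S.
Variables (N n0 : nat) (W : 'M[C]_n0) (m : 'I_n0) (U : 'M[C]_N) (f : 'I_n0 -> 'I_N).
Definition SS := connection (rowseq W m) [seq rowseq U (f k) | k <- enum 'I_n0].

Let Bl := [seq [seq nth 0 (rowseq W m) k * x | x <- nth [::] [seq rowseq U (f k) | k <- enum 'I_n0] k] | k <- iota 0 n0].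

Lemma SS_eq : SS = flatten Bl.
Proof. rewrite /SS (@conn_eq _ _ n0); [by [] | |]; by rewrite /rowseq size_map size_enum_ord. Qed.

Lemma Bl_all : all (fun b => size b == N) Bl.
Proof.
apply/allP => b /mapP[k]; rewrite mem_iota add0n => /andP[_ Hk] ->.
rewrite size_map (nth_map (Ordinal Hk)) ?size_enum_ord //. idtac.
by rewrite /rowseq size_map size_enum_ord.
Qed.

Lemma size_SS : size SS = (n0 * N)%N.
Proof. by rewrite SS_eq (size_flat _ _ Bl_all) size_map size_iota. Qed.

Lemma nth_SS (j : 'I_n0) (r : 'I_N) : nth 0 SS (j * N + r) = W m j * U (f j) r.
Proof.
rewrite SS_eq (nth_flat _ _ Bl_all) //.
rewrite (nth_map 0) ?size_iota // nth_iota // add0n.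
have E2 i (a : 'I_i -> C) (q : 'I_i) : nth 0 [seq a k | k <- enum 'I_i] q = a q.
  by rewrite (nth_map q) ?size_enum_ord // nth_ord_enum.
have E1 : nth [::] [seq rowseq U (f k) | k <- enum 'I_n0] j = rowseq U (f j).
  by rewrite (nth_map j) ?size_enum_ord // nth_ord_enum.
rewrite E1 /rowseq (nth_map 0); last by rewrite size_map size_enum_ord.
by rewrite !E2.
Qed.

Lemma nth_SS_out t (r : nat) : (n0 <= t)%N -> (r < N)%N -> nth 0 SS (t * N + r) = 0.
Proof.
move=> Ht Hr; apply: nth_default; rewrite size_SS.
by apply: leq_trans (leq_addr _ _); rewrite leq_mul2r Ht orbT.
Qed.
End S.


Lemma corr_blocks (s s' : seq C) n0 N (k : int) : size s = (n0 * N)%N ->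
  corr s s' (k * N%:Z) = \sum_(j < n0) \sum_(r < N)
     nth 0 s (j * N + r) * Num.conj (sfun s' ((j%:Z + k) * N%:Z + r%:Z)).
Proof.
move=> Hs; rewrite /corr Hs.
rewrite (sum_blocks (fun l => sfun s l%:Z * Num.conj (sfun s' (l%:Z + k * N%:Z)))).
apply eq_bigr => j _; apply eq_bigr => r _ /=.
congr (_ * Num.conj (sfun _ _)).
by rewrite PoszD PoszM mulrDl addrAC.
Qed.

Lemma sfun_blk_neg (s : seq C) N (z : int) (r : nat) : z < 0 -> (r < N)%N ->
  sfun s (z * N%:Z + r%:Z) = 0.
Proof.
move=> Hz Hr; apply: sfun_neg.
have H1 : z * N%:Z + r%:Z < z * N%:Z + N%:Z by rewrite ltrD2l ltz_nat.
apply: (lt_le_trans H1).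
have -> : z * N%:Z + N%:Z = (z + 1) * N%:Z by rewrite mulrDl mul1r.
by apply: mulr_le0_ge0; rewrite ?lezD1.
Qed.

Lemma rows_orth n0 (W : 'M[C]_n0) : unitary_like W ->
  exists a : C, forall i j, \sum_r W i r * Num.conj (W j r) = a * (i == j)%:R.
Proof.
case=> a [_ _ H _]; exists a => i j.
move: (congr1 (fun M : 'M[C]_n0 => M i j) H); rewrite !mxE mulr_natr => <-.
by apply eq_bigr => r _; rewrite /ctr !mxE.
Qed.

Section T.
Variables (N n1 n2 : nat) (W1 : 'M[C]_n1) (W2 : 'M[C]_n2) (m1 : 'I_n1) (m2 : 'I_n2)
  (U : 'M[C]_N) (f1 : 'I_n1 -> 'I_N) (f2 : 'I_n2 -> 'I_N) (a : C)
  (Horth : forall i j, \sum_r U i r * Num.conj (U j r) = a * (i == j)%:R)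
  (k : int) (j : 'I_n1).

Definition TT := \sum_(r < N) nth 0 (SS N n1 W1 m1 U f1) (j * N + r) *
   Num.conj (sfun (SS N n2 W2 m2 U f2) ((j%:Z + k) * N%:Z + r%:Z)).

Lemma TT_neg : j%:Z + k < 0 -> TT = 0.
Proof.
move=> H; apply: big1 => r _.
by rewrite sfun_blk_neg // rmorph0 mulr0.
Qed.

Lemma TT_big t : j%:Z + k = t%:Z -> (n2 <= t)%N -> TT = 0.
Proof.
move=> E Ht; apply: big1 => r _.
by rewrite E -PoszM -PoszD /= (nth_SS_out N n2 W2 m2 U f2 t r) // rmorph0 mulr0.
Qed.

Lemma TT_in (o : 'I_n2) : j%:Z + k = o%:Z ->
  TT = W1 m1 j * Num.conj (W2 m2 o) * (a * (f1 j == f2 o)%:R).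
Proof.
move=> E; rewrite /TT E -Horth mulr_sumr; apply: eq_bigr => r _.
rewrite -PoszM -PoszD /= !nth_SS rmorphM.
by rewrite mulrACA.
Qed.
End T.

End H.

Theorem theorem2 (C : numClosedFieldType) (N : nat) (U : 'M[C]_N)
  (P : nat) (n : 'I_P -> nat)
  (idx : forall p : 'I_P, 'I_(n p) -> 'I_N)
  (Up : forall p : 'I_P, 'M[C]_(n p)) :
  (0 < N)%N ->
  unitary_like U ->
  (forall p, 0 < n p)%N ->
  bijective (fun x : {p : 'I_P & 'I_(n p)} => idx (tag x) (tagged x)) ->
  (forall p, unitary_like (Up p)) ->
  is_optimal_COSF N (undup [seq (n p * N)%N | p <- enum 'I_P])
    (fun x : {p : 'I_P & 'I_(n p)} =>
       connection (rowseq (Up (tag x)) (tagged x))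
               [seq rowseq U (idx (tag x) k) | k <- enum 'I_(n (tag x))]).
Proof.
move=> N0 HU Hn Hbij HUp.
have finj := bij_inj Hbij.
change (is_optimal_COSF N (undup [seq (n p * N)%N | p <- enum 'I_P])
    (fun x : {p : 'I_P & 'I_(n p)} => SS C N (n (tag x)) (Up (tag x)) (tagged x) U (idx (tag x)))).
split; last by rewrite (bij_eq_card Hbij) card_ord.
split.
- by move=> x; rewrite size_SS dvdn_mull.
- split; first exact: undup_uniq.
  move=> z; rewrite mem_undup; apply/mapP/mapP => [[p _ ->]|[x _ ->]].
    exists (@Tagged _ p (fun p => 'I_(n p)) (Ordinal (Hn p))); first by rewrite mem_enum.
    by rewrite size_SS.
  by exists (tag x); rewrite ?mem_enum // size_SS.
have [a Ha] := rows_orth _ _ _ HU.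
have Z : forall (x y : {p : 'I_P & 'I_(n p)}) (k : int), (x != y) || (k != 0) ->
    corr (SS C N (n (tag x)) (Up (tag x)) (tagged x) U (idx (tag x)))
         (SS C N (n (tag y)) (Up (tag y)) (tagged y) U (idx (tag y))) (k * N%:Z) = 0.
  move=> [p m] [p' m'] k /= Hne.
  rewrite (corr_blocks _ _ _ _ _ _ (size_SS _ _ _ _ _ _ _)).
  transitivity (\sum_(j < n p) TT C N (n p) (n p') (Up p) (Up p') m m' U (idx p) (idx p') k j); first by [].
  case: (eqVneq p p') => [Epp|Hpp].
    subst p'.
    case: (eqVneq k 0) => [Ek|Hk].
      subst k.
      have Hmm : m != m'.
        by move: Hne; rewrite eqxx orbF; apply: contra => /eqP->.
      have [b Hb] := rows_orth _ _ _ (HUp p).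
      under eq_bigr => j _ do rewrite (TT_in _ _ _ _ _ _ _ _ _ _ _ _ Ha 0 j j (addr0 _)) eqxx mulr1.
      by rewrite -mulr_suml Hb (negbTE Hmm) mulr0 mul0r.
    apply: big1 => j _.
    case: (ltrP (j%:Z + k) 0) => [Hneg|Hpos]; first exact: TT_neg.
    case Et: (j%:Z + k) Hpos => [t|t] // _.
    case: (ltnP t (n p)) => [Ht|Ht]; last exact: (TT_big _ _ _ _ _ _ _ _ _ _ _ _ _ t Et Ht).
    rewrite (TT_in _ _ _ _ _ _ _ _ _ _ _ _ Ha k j (Ordinal Ht) Et).
    suff -> : (idx p j == idx p (Ordinal Ht)) = false by rewrite !mulr0.
    apply/negbTE/eqP => Hf.
    have := finj (Tagged (fun p => 'I_(n p)) j) (Tagged (fun p => 'I_(n p)) (Ordinal Ht)) Hf.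
    move/(congr1 (tagged_as (Tagged (fun p => 'I_(n p)) j))); rewrite !tagged_asE => Ejo.
    move: Et; rewrite Ejo /= -{2}(addr0 t%:Z) => /addrI Ek.
    by rewrite Ek eqxx in Hk.
  apply: big1 => j _.
  case: (ltrP (j%:Z + k) 0) => [Hneg|Hpos]; first exact: TT_neg.
  case Et: (j%:Z + k) Hpos => [t|t] // _.
  case: (ltnP t (n p')) => [Ht|Ht]; last exact: (TT_big _ _ _ _ _ _ _ _ _ _ _ _ _ t Et Ht).
  rewrite (TT_in _ _ _ _ _ _ _ _ _ _ _ _ Ha k j (Ordinal Ht) Et).
  suff -> : (idx p j == idx p' (Ordinal Ht)) = false by rewrite !mulr0.
  apply/negbTE/eqP => Hf.
  have := finj (Tagged (fun p => 'I_(n p)) j) (Tagged (fun p => 'I_(n p)) (Ordinal Ht)) Hf.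
  move/(congr1 tag) => /= E.
  by rewrite E eqxx in Hpp.
move=> x y k.
case: (eqVneq x y) => [<-|Hxy].
  case: (eqVneq k 0) => [->|Hk]; first by rewrite mul0r !mulr1.
  by rewrite mulr0 Z // Hk orbT.
by rewrite mulr0 mul0r Z // Hxy.
Qed.
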